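(* Let $p$ be a natural number and $\mathcal{M}=M_2(\mathbb{C})\oplus_\infty\cdots\oplus_\infty M_2(\mathbb{C})$ ($p$ times). Let $\mathbf{x}=(x_1,\dots,x_p)\in\mathcal{M}$ with $x_i=\begin{bmatrix} x^{(i)}_{11} & x^{(i)}_{12}\\ x^{(i)}_{21} & x^{(i)}_{22}\end{bmatrix}$, and let $\mathcal{V}=D_2(\mathbb{C})\oplus\cdots\oplus D_2(\mathbb{C})$ ($p$ times), where $D_2(\mathbb{C})$ is the subspace of diagonal matrices in $M_2(\mathbb{C})$. Then \[ dist(\mathbf{x},\mathcal{V}) = \max\{|x_{12}^{(i)}|,|x_{21}^{(i)}|:~1\leq i \leq p\} \quad \text{and} \quad dist_1(\mathbf{x},\mathcal{V})=\sum_{i=1}^p \big(|x^{(i)}_{21}|+|x^{(i)}_{12}|\big). \]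
   Context: $\mathcal{M}$ carries the $C^*$-norm $\|(z_1,\dots,z_p)\|=\max_i\|z_i\|$ (operator norms), and $dist$ is the distance in this norm. $dist_1$ is the distance with respect to the norm $\|(z_1,\dots,z_p)\|_1=\sum_i Tr(|z_i|)$ (sum of trace norms). *)

(* Defs.v *)
From HB Require Import structures.
From mathcomp Require Import all_boot all_order all_algebra.
From mathcomp Require Import all_classical all_reals.
From mathcomp Require Import complex.
Set Implicit Arguments. Unset Strict Implicit. Unset Printing Implicit Defensive.
Import Order.TTheory GRing.Theory Num.Theory.
Local Open Scope ring_scope.
Local Open Scope classical_set_scope.

Section Defs.
Variable R : realType.
Local Notation C := (R[i]).

Definition cabs (z : C) : R := complex.Re `|z|.

Definition adjmx m n (A : 'M[C]_(m, n)) : 'M[C]_(n, m) := (map_mx Num.conj A)^T.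

Definition vnorm (v : 'cV[C]_2) : R := Num.sqrt (\sum_(k < 2) cabs (v k 0) ^+ 2).

Definition opnorm (A : 'M[C]_2) : R :=
  sup [set vnorm (A *m v) | v in [set v : 'cV[C]_2 | vnorm v <= 1]].

Definition psd (P : 'M[C]_2) : Prop :=
  P = adjmx P /\ forall v : 'cV[C]_2, 0 <= (adjmx v *m P *m v) 0 0.

(* |A| = (A^* A)^{1/2}, the (unique) positive semidefinite square root *)
Definition absmx (A : 'M[C]_2) : 'M[C]_2 :=
  xget 0 [set P | psd P /\ P *m P = adjmx A *m A].

Definition trnorm (A : 'M[C]_2) : R := complex.Re (\tr (absmx A)).

Definition Mnorm (p : nat) (z : 'I_p -> 'M[C]_2) : R :=
  \big[Num.max/0]_(i < p) opnorm (z i).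

Definition Mnorm1 (p : nat) (z : 'I_p -> 'M[C]_2) : R :=
  \sum_(i < p) trnorm (z i).

Definition dist (p : nat) (x : 'I_p -> 'M[C]_2) (V : set ('I_p -> 'M[C]_2)) : R :=
  inf [set Mnorm (fun i => x i - v i) | v in V].

Definition dist1 (p : nat) (x : 'I_p -> 'M[C]_2) (V : set ('I_p -> 'M[C]_2)) : R :=
  inf [set Mnorm1 (fun i => x i - v i) | v in V].

Definition diagV (p : nat) : set ('I_p -> 'M[C]_2) :=
  [set v | forall i, is_diag_mx (v i)].

End Defs.

(* Main.v *)
Require Import Defs.
From HB Require Import structures.
From mathcomp Require Import all_boot all_order all_algebra.
From mathcomp Require Import all_classical all_reals.
From mathcomp Require Import complex.
From mathcomp Require Import ring lra.
Import Order.TTheory GRing.Theory Num.Theory.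
Local Open Scope ring_scope.
Local Open Scope complex_scope.
Local Open Scope classical_set_scope.

Section Main.
Variable R : realType.
Local Notation C := R[i].
Implicit Types z w : C.

Lemma normE z : `|z| = (cabs z)%:C.
Proof. by case: z. Qed.

Lemma conjE z : Num.conj z = conjc z.
Proof. by []. Qed.

Lemma cabs_ge0 z : 0 <= cabs z.
Proof. by rewrite -ler0c -normE. Qed.

Lemma cabsM z w : cabs (z * w) = cabs z * cabs w.
Proof. by apply: complexI; rewrite rmorphM /= -!normE normrM. Qed.

Lemma cabsD z w : cabs (z + w) <= cabs z + cabs w.
Proof. by rewrite -lecR rmorphD /= -!normE ler_normD. Qed.

Lemma cabsN z : cabs (- z) = cabs z.
Proof. by apply: complexI; rewrite -!normE normrN. Qed.

Lemma cabs0 : cabs (0 : C) = 0.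
Proof. by apply: complexI; rewrite -!normE normr0. Qed.

Lemma cabs_eq0 z : cabs z = 0 -> z = 0.
Proof. by move=> h; apply/eqP; rewrite -normr_eq0 normE h. Qed.

Lemma cabs_conj z : Num.conj z * z = (cabs z ^+ 2)%:C.
Proof. by rewrite -normCKC normE rmorphXn. Qed.

Lemma conj_real (r : R) : Num.conj (r%:C) = r%:C.
Proof. by rewrite conjE conjc_real. Qed.

Lemma sum2 (F : 'I_2 -> C) : \sum_(k < 2) F k = F ord0 + F ord_max.
Proof.
rewrite !big_ord_recl big_ord0 addr0; congr (_ + F _).
by apply: val_inj.
Qed.

Lemma sum2R (F : 'I_2 -> R) : \sum_(k < 2) F k = F ord0 + F ord_max.
Proof.
rewrite !big_ord_recl big_ord0 addr0; congr (_ + F _).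
by apply: val_inj.
Qed.

Lemma I2 (i : 'I_2) : i = ord0 \/ i = ord_max.
Proof.
case: i => [[|[|n]] h]; [left|right|by []]; exact: val_inj.
Qed.

Lemma tr2 (A : 'M[C]_2) : \tr A = A ord0 ord0 + A ord_max ord_max.
Proof. by rewrite /mxtrace sum2. Qed.

Lemma det2 (A : 'M[C]_2) :
  \det A = A ord0 ord0 * A ord_max ord_max - A ord0 ord_max * A ord_max ord0.
Proof.
rewrite (expand_det_row A ord0) sum2 /cofactor !det_mx11 !mxE /=.
have -> : lift ord0 (0 : 'I_1) = ord_max :> 'I_2 by apply: val_inj.
have -> : lift ord_max (0 : 'I_1) = ord0 :> 'I_2 by apply: val_inj.
rewrite /= expr0 expr1; ring.
Qed.

Lemma CH2 (M : 'M[C]_2) (s : C) :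
  (M + s%:M) *m (M + s%:M) = (\tr M + 2 * s) *: M + (s ^+ 2 - \det M)%:M.
Proof.
rewrite tr2 det2; apply/matrixP => i j; rewrite !mxE sum2 !mxE.
by case: (I2 i) => ->; case: (I2 j) => -> /=; ring.
Qed.


Lemma adjmxE m n (A : 'M[C]_(m, n)) i j : adjmx A i j = Num.conj (A j i).
Proof. by rewrite /adjmx !mxE. Qed.

Lemma adjmxM m n p (A : 'M[C]_(m, n)) (B : 'M[C]_(n, p)) :
  adjmx (A *m B) = adjmx B *m adjmx A.
Proof. by rewrite /adjmx map_mxM trmx_mul. Qed.

Lemma adjmxK m n (A : 'M[C]_(m, n)) : adjmx (adjmx A) = A.
Proof. by apply/matrixP => i j; rewrite !adjmxE conjCK. Qed.

Definition vec2 (a b : C) : 'cV[C]_2 := \col_i (if i == ord0 then a else b).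

Lemma vec2E0 a b : vec2 a b ord0 0 = a.
Proof. by rewrite !mxE. Qed.
Lemma vec2E1 a b : vec2 a b ord_max 0 = b.
Proof. by rewrite !mxE. Qed.

Lemma qf (P : 'M[C]_2) (v : 'cV[C]_2) :
  (adjmx v *m P *m v) 0 0 =
  Num.conj (v ord0 0) * (P ord0 ord0 * v ord0 0 + P ord0 ord_max * v ord_max 0)
  + Num.conj (v ord_max 0) * (P ord_max ord0 * v ord0 0 + P ord_max ord_max * v ord_max 0).
Proof.
rewrite !mxE sum2 !mxE !sum2 !adjmxE.
have -> : (0 : 'I_1) = ord0 by apply: val_inj.
ring.
Qed.

Lemma qf_vec2 (P : 'M[C]_2) a b :
  (adjmx (vec2 a b) *m P *m (vec2 a b)) 0 0 =
  Num.conj a * (P ord0 ord0 * a + P ord0 ord_max * b)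
  + Num.conj b * (P ord_max ord0 * a + P ord_max ord_max * b).
Proof. by rewrite qf !vec2E0 !vec2E1. Qed.

Lemma ge0_eq {x y : C} : 0 <= x -> x = y -> 0 <= y.
Proof. by move=> h <-. Qed.

Lemma psd_facts (P : 'M[C]_2) : psd P ->
  [/\ Num.conj (P ord0 ord0) = P ord0 ord0,
      Num.conj (P ord_max ord_max) = P ord_max ord_max,
      P ord_max ord0 = Num.conj (P ord0 ord_max),
      0 <= \tr P &
      0 <= \det P].
Proof.
move=> [hP hq].
set a := P ord0 ord0; set b := P ord_max ord_max; set c := P ord0 ord_max.
have ha : Num.conj a = a by rewrite /a {2}hP adjmxE.
have hb : Num.conj b = b by rewrite /b {2}hP adjmxE.
have hc : P ord_max ord0 = Num.conj c by rewrite /c {1}hP adjmxE.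
have a0 : 0 <= a.
  by have := hq (vec2 1 0); rewrite qf_vec2 hc conjC1 conjC0 => h;
     refine (ge0_eq h _); rewrite /a; ring.
have b0 : 0 <= b.
  by have := hq (vec2 0 1); rewrite qf_vec2 hc conjC1 conjC0 => h;
     refine (ge0_eq h _); rewrite -/b; ring.
have hd : \det P = a * b - c * Num.conj c by rewrite det2 hc.
have bd : 0 <= b * \det P.
  have := hq (vec2 b (- Num.conj c)); rewrite qf_vec2 hc hb -[Num.conj c]/(Num.conj c) (_ : Num.conj (- Num.conj c) = - c) => [h|]; last by rewrite raddfN /= conjCK.
  by refine (ge0_eq h _); rewrite hd -/a -/b -/c; ring.
have ad : 0 <= a * \det P.
  have := hq (vec2 c (- a)); rewrite qf_vec2 hc raddfN /= ha => h.
  by refine (ge0_eq h _); rewrite hd -/a -/b -/c; ring.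
split => //; first by rewrite tr2 addr_ge0.
have [ab0|ab0] := boolP (a + b == 0).
  move: ab0; rewrite paddr_eq0 // => /andP[/eqP a00 /eqP b00].
  have := hq (vec2 1 (- Num.conj c)); rewrite qf_vec2 hc (_ : Num.conj (- Num.conj c) = - c); last by rewrite raddfN /= conjCK.
  rewrite conjC1 -/a -/b a00 b00 => h.
  have -> : \det P = (- (2 * c * Num.conj c)) / 2.
    by rewrite hd a00 mul0r; field.
  by apply: divr_ge0 => //; refine (ge0_eq h _); rewrite -/c; ring.
have abp : 0 < a + b by rewrite lt_def ab0 addr_ge0.
by rewrite -(pmulr_rge0 _ abp) mulrDl addr_ge0.
Qed.


Definition Ssum (A : 'M[C]_2) : R :=
  cabs (A ord0 ord0) ^+ 2 + cabs (A ord0 ord_max) ^+ 2 +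
  cabs (A ord_max ord0) ^+ 2 + cabs (A ord_max ord_max) ^+ 2.

Lemma tr_adjM (A : 'M[C]_2) : \tr (adjmx A *m A) = (Ssum A)%:C.
Proof.
rewrite tr2 !mxE !sum2 !adjmxE !cabs_conj /Ssum !rmorphD /=; ring.
Qed.

Lemma det_adjM (A : 'M[C]_2) : \det (adjmx A *m A) = (cabs (\det A) ^+ 2)%:C.
Proof. by rewrite det_mulmx /adjmx det_tr det_map_mx cabs_conj. Qed.

Lemma tr_sqrt (A P : 'M[C]_2) : psd P -> P *m P = adjmx A *m A ->
  0 <= complex.Re (\tr P) /\
  complex.Re (\tr P) ^+ 2 = Ssum A + 2 * cabs (\det A).
Proof.
move=> hp hPP; have [ha hb hc t0 d0] := psd_facts _ hp.
have htr : \tr (P *m P) = \tr P ^+ 2 - 2 * \det P.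
  by rewrite !tr2 det2 !mxE !sum2 hc; ring.
have hdet : \det (P *m P) = \det P ^+ 2 by rewrite det_mulmx expr2.
rewrite hPP tr_adjM in htr; rewrite hPP det_adjM in hdet.
have dE : \det P = (cabs (\det A))%:C.
  apply/eqP; rewrite -(@eqrXn2 _ 2) //; last by rewrite ler0c cabs_ge0.
  by rewrite -hdet rmorphXn.
have tE : \tr P = (complex.Re (\tr P))%:C.
  move: (ger0_Im t0); case: (\tr P) => re im /= ->; by [].
split; first by rewrite -ler0c -tE.
apply: complexI; rewrite rmorphXn /=.
transitivity (\tr P ^+ 2); first by congr (_ ^+ 2); exact: (esym tE).
rewrite rmorphD rmorphM /= -dE.
have -> : (2 : R)%:C = 2 by rewrite rmorph_nat.
rewrite htr; ring.
Qed.


Lemma qf_ge0 (w : 'cV[C]_2) : 0 <= (adjmx w *m w) 0 0.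
Proof.
rewrite !mxE sum2 !adjmxE !cabs_conj.
by apply: addr_ge0; rewrite ler0c exprn_ge0 // cabs_ge0.
Qed.

Lemma Ssum_ge0 (A : 'M[C]_2) : 0 <= Ssum A.
Proof. by rewrite /Ssum; do 3 ?apply: addr_ge0; apply: sqr_ge0. Qed.

Lemma Ssum0 (A : 'M[C]_2) : Ssum A = 0 -> A = 0.
Proof.
rewrite /Ssum => h.
have := cabs_ge0 (A ord0 ord0); have := cabs_ge0 (A ord0 ord_max).
have := cabs_ge0 (A ord_max ord0); have := cabs_ge0 (A ord_max ord_max).
move: h; set a := cabs _; set b := cabs _; set c := cabs _; set d := cabs _ => h h1 h2 h3 h4.
have a0 : a = 0 by nra.
have b0 : b = 0 by nra.
have c0 : c = 0 by nra.
have d0 : d = 0 by nra.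
apply/matrixP => i j; rewrite mxE.
by case: (I2 i) => ->; case: (I2 j) => ->; apply: cabs_eq0.
Qed.

Lemma adjmxZ (k : C) (X : 'M[C]_2) : adjmx (k *: X) = Num.conj k *: adjmx X.
Proof. by apply/matrixP => i j; rewrite !adjmxE !mxE rmorphM. Qed.

Lemma adjmxD (X Y : 'M[C]_2) : adjmx (X + Y) = adjmx X + adjmx Y.
Proof. by apply/matrixP => i j; rewrite !adjmxE !mxE rmorphD. Qed.

Lemma adjmx_scalar (a : C) : adjmx (a%:M : 'M[C]_2) = (Num.conj a)%:M.
Proof. by apply/matrixP => i j; rewrite !adjmxE !mxE rmorphMn eq_sym. Qed.

Lemma conjV_real (r : R) : Num.conj ((r%:C)^-1) = (r%:C)^-1.
Proof. by rewrite -fmorphV conj_real. Qed.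

Lemma sqrt_exists (A : 'M[C]_2) : exists P, psd P /\ P *m P = adjmx A *m A.
Proof.
set M := adjmx A *m A.
set s := (cabs (\det A))%:C.
set r := Num.sqrt (Ssum A + 2 * cabs (\det A)).
have hM : adjmx M = M by rewrite /M adjmxM adjmxK.
have trM : \tr M = (Ssum A)%:C := tr_adjM A.
have detM : \det M = s ^+ 2 by rewrite det_adjM /s rmorphXn.
have S0 := Ssum_ge0 A.
have c0 := cabs_ge0 (\det A).
have r2 : r ^+ 2 = Ssum A + 2 * cabs (\det A).
  by rewrite sqr_sqrtr // addr_ge0 // mulr_ge0.
have [A0|An0] := eqVneq A 0.
  exists 0; rewrite /M A0 !mulmx0; split => //; split.
    by apply/matrixP => i j; rewrite adjmxE !mxE conjC0.
  by move=> v; rewrite mulmx0 mul0mx mxE.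
have rn0 : r != 0.
  apply/eqP => r0; move: r2; rewrite r0 expr0n /= => h.
  by move/eqP: An0; apply; apply: Ssum0; lra.
exists ((r%:C)^-1 *: (M + s%:M)); split; first split.
- by rewrite adjmxZ adjmxD hM adjmx_scalar conjV_real /s conj_real.
- move=> v; rewrite -scalemxAr -scalemxAl mulmxDr mulmxDl mul_mx_scalar -scalemxAl.
  have -> : adjmx v *m M *m v = adjmx (A *m v) *m (A *m v).
    by rewrite /M !mulmxA -adjmxM -mulmxA.
  have := qf_ge0 (A *m v); have := qf_ge0 v.
  move: (adjmx (A *m v) *m (A *m v)) (adjmx v *m v) => Y Z hZ hY.
  rewrite !mxE; apply: mulr_ge0; first by rewrite invr_ge0 ler0c sqrtr_ge0.
  by apply: addr_ge0 => //; apply: mulr_ge0 => //; rewrite /s ler0c.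
- rewrite -scalemxAl -scalemxAr scalerA CH2 trM detM subrr raddf0 addr0 scalerA.
  have -> : (Ssum A)%:C + 2 * s = r%:C ^+ 2.
    have h2 : (2 : R)%:C = 2 by rewrite rmorph_nat.
    by rewrite -rmorphXn r2 /s [RHS]rmorphD [in RHS]rmorphM /= h2.
  have rC : r%:C != 0 by rewrite fmorph_eq0.
  have -> : (r%:C)^-1 / r%:C * r%:C ^+ 2 = 1 by field.
  by rewrite scale1r.
Qed.


Lemma trnormE (A : 'M[C]_2) :
  trnorm A = Num.sqrt (Ssum A + 2 * cabs (\det A)).
Proof.
rewrite /trnorm /absmx.
have hx := xgetPex 0 (sqrt_exists A).
have [h0 h2] := tr_sqrt A _ hx.1 hx.2.
by rewrite -h2 sqrtr_sqr ger0_norm.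
Qed.

Lemma sqrt_ge (X y : R) : 0 <= y -> y ^+ 2 <= X -> y <= Num.sqrt X.
Proof.
move=> y0 h; rewrite -(ger0_norm y0) -sqrtr_sqr; exact: ler_wsqrtr.
Qed.

Lemma sqrt_le (X y : R) : 0 <= y -> X <= y ^+ 2 -> Num.sqrt X <= y.
Proof.
move=> y0 h; rewrite -(ger0_norm y0) -sqrtr_sqr; exact: ler_wsqrtr.
Qed.

Lemma trnorm_lb (A : 'M[C]_2) :
  cabs (A ord_max ord0) + cabs (A ord0 ord_max) <= trnorm A.
Proof.
rewrite trnormE; apply: sqrt_ge; first by apply: addr_ge0; exact: cabs_ge0.
have hD : A ord0 ord_max * A ord_max ord0 =
   A ord0 ord0 * A ord_max ord_max + - \det A by rewrite det2; ring.
have := cabsD (A ord0 ord0 * A ord_max ord_max) (- \det A).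
rewrite -hD cabsN !cabsM /Ssum.
have := cabs_ge0 (A ord0 ord0); have := cabs_ge0 (A ord0 ord_max).
have := cabs_ge0 (A ord_max ord0); have := cabs_ge0 (A ord_max ord_max).
have := cabs_ge0 (\det A).
move: (cabs (A ord0 ord0)) (cabs (A ord0 ord_max)) (cabs (A ord_max ord0))
  (cabs (A ord_max ord_max)) (cabs (\det A)) => p x y q e.
move=> e0 q0 y0 x0 p0 h.
have := sqr_ge0 (p - q); nra.
Qed.

Lemma trnorm_off (A : 'M[C]_2) : A ord0 ord0 = 0 -> A ord_max ord_max = 0 ->
  trnorm A = cabs (A ord_max ord0) + cabs (A ord0 ord_max).
Proof.
move=> h0 h1; apply/le_anti; rewrite trnorm_lb andbT trnormE.
apply: sqrt_le; first by apply: addr_ge0; exact: cabs_ge0.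
rewrite det2 h0 h1 mul0r sub0r cabsN cabsM /Ssum h0 h1 cabs0.
rewrite le_eqVlt; apply/orP; left; apply/eqP; ring.
Qed.


Lemma vnormE (v : 'cV[C]_2) :
  vnorm v = Num.sqrt (cabs (v ord0 0) ^+ 2 + cabs (v ord_max 0) ^+ 2).
Proof. by rewrite /vnorm sum2R. Qed.

Lemma cabs1 : cabs (1 : C) = 1.
Proof. by apply: complexI; rewrite -normE normr1. Qed.

Lemma mulv_entry (A : 'M[C]_2) (v : 'cV[C]_2) i :
  (A *m v) i 0 = A i ord0 * v ord0 0 + A i ord_max * v ord_max 0.
Proof. by rewrite mxE sum2. Qed.

Lemma mulv_cabs (A : 'M[C]_2) (v : 'cV[C]_2) i :
  cabs ((A *m v) i 0) <=
  cabs (A i ord0) * cabs (v ord0 0) + cabs (A i ord_max) * cabs (v ord_max 0).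
Proof. by rewrite mulv_entry -!cabsM; apply: cabsD. Qed.

Lemma vnorm_le1 (v : 'cV[C]_2) : vnorm v <= 1 ->
  cabs (v ord0 0) ^+ 2 + cabs (v ord_max 0) ^+ 2 <= 1.
Proof.
rewrite vnormE; set X := _ + _ => h.
have X0 : 0 <= X by rewrite /X addr_ge0 // sqr_ge0.
have := sqr_sqrtr X0; have := sqrtr_ge0 X; move: (Num.sqrt X) h => s h s0 hs.
nra.
Qed.

Definition opset (A : 'M[C]_2) :=
  [set vnorm (A *m v) | v in [set v : 'cV[C]_2 | vnorm v <= 1]].

Lemma opset_ub (A : 'M[C]_2) : has_ubound (opset A).
Proof.
exists (cabs (A ord0 ord0) + cabs (A ord0 ord_max) + cabs (A ord_max ord0)
  + cabs (A ord_max ord_max)).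
move=> _ [v hv <-]; have hu := vnorm_le1 _ hv.
rewrite vnormE; apply: sqrt_le.
  by do 3 ?apply: addr_ge0; exact: cabs_ge0.
have := mulv_cabs A v ord0; have := mulv_cabs A v ord_max.
have := cabs_ge0 ((A *m v) ord0 0); have := cabs_ge0 ((A *m v) ord_max 0).
have := cabs_ge0 (A ord0 ord0); have := cabs_ge0 (A ord0 ord_max).
have := cabs_ge0 (A ord_max ord0); have := cabs_ge0 (A ord_max ord_max).
have := cabs_ge0 (v ord0 0); have := cabs_ge0 (v ord_max 0).
move: hu.
move: (cabs ((A *m v) ord0 0)) (cabs ((A *m v) ord_max 0))
  (cabs (A ord0 ord0)) (cabs (A ord0 ord_max)) (cabs (A ord_max ord0))
  (cabs (A ord_max ord_max)) (cabs (v ord0 0)) (cabs (v ord_max 0)).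
move=> c0 c1 a b c d u0 u1 hu hu1 hu0 hd hc hb ha hc1 hc0 h1 h0.
have u0le : u0 <= 1 by nra.
have u1le : u1 <= 1 by nra.
have e0 : c0 <= a + b by nra.
have e1 : c1 <= c + d by nra.
nra.
Qed.

Lemma op_lb (A : 'M[C]_2) :
  cabs (A ord0 ord_max) <= opnorm A /\ cabs (A ord_max ord0) <= opnorm A.
Proof.
have ub := ub_le_sup (opset_ub A).
have vn1 : forall a b : C, cabs a ^+ 2 + cabs b ^+ 2 = 1 -> vnorm (vec2 a b) <= 1.
  by move=> a b h; rewrite vnormE vec2E0 vec2E1 h sqrtr1.
split.
- apply: le_trans (ub _ _); last first.
    exists (vec2 0 1); first by apply: vn1; rewrite cabs0 cabs1; ring.
    reflexivity.
  rewrite vnormE !mulv_entry !vec2E0 !vec2E1 !mulr0 !add0r !mulr1.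
  apply: sqrt_ge; first exact: cabs_ge0.
  by rewrite lerDl sqr_ge0.
- apply: le_trans (ub _ _); last first.
    exists (vec2 1 0); first by apply: vn1; rewrite cabs0 cabs1; ring.
    reflexivity.
  rewrite vnormE !mulv_entry !vec2E0 !vec2E1 !mulr0 !addr0 !mulr1.
  apply: sqrt_ge; first exact: cabs_ge0.
  by rewrite lerDr sqr_ge0.
Qed.

Lemma op_off (A : 'M[C]_2) : A ord0 ord0 = 0 -> A ord_max ord_max = 0 ->
  opnorm A <= Num.max (cabs (A ord0 ord_max)) (cabs (A ord_max ord0)).
Proof.
move=> h0 h1; apply: ge_sup.
  exists (vnorm (A *m 0)), 0 => //=.
  by rewrite vnormE !mxE cabs0 expr0n /= addr0 sqrtr0.
move=> _ [v hv <-]; have hu := vnorm_le1 _ hv.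
have hx : cabs (A ord0 ord_max) <= Num.max (cabs (A ord0 ord_max)) (cabs (A ord_max ord0)).
  by rewrite le_max lexx.
have hy : cabs (A ord_max ord0) <= Num.max (cabs (A ord0 ord_max)) (cabs (A ord_max ord0)).
  by rewrite le_max lexx orbT.
have m0 : 0 <= Num.max (cabs (A ord0 ord_max)) (cabs (A ord_max ord0)).
  exact: le_trans (cabs_ge0 _) hx.
rewrite vnormE !mulv_entry h0 h1 !mul0r add0r addr0 !cabsM.
apply: sqrt_le => //.
have := cabs_ge0 (A ord0 ord_max); have := cabs_ge0 (A ord_max ord0).
have := cabs_ge0 (v ord0 0); have := cabs_ge0 (v ord_max 0).
move: hx hy m0 hu.
move: (cabs (A ord0 ord_max)) (cabs (A ord_max ord0)) (Num.max _ _)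
  (cabs (v ord0 0)) (cabs (v ord_max 0)) => x y m u0 u1 hx hy m0 hu hu1 hu0 hy0 hx0.
have x2 : x ^+ 2 <= m ^+ 2 by nra.
have y2 : y ^+ 2 <= m ^+ 2 by nra.
nra.
Qed.


Lemma diag_off (D : 'M[C]_2) : is_diag_mx D ->
  D ord0 ord_max = 0 /\ D ord_max ord0 = 0.
Proof.
move/forallP => h; split.
- by move: (h ord0) => /forallP/(_ ord_max)/implyP/(_ isT)/eqP.
- by move: (h ord_max) => /forallP/(_ ord0)/implyP/(_ isT)/eqP.
Qed.

Definition dg (A : 'M[C]_2) : 'M[C]_2 :=
  \matrix_(i, j) (if i == j then A i j else 0).

Lemma dg_diag A : is_diag_mx (dg A).
Proof.
apply/forallP => i; apply/forallP => j; apply/implyP => hij; rewrite mxE.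
by have [e|ne] := eqVneq i j; [rewrite e eqxx in hij|].
Qed.

Lemma offE (A : 'M[C]_2) :
  [/\ (A - dg A) ord0 ord0 = 0, (A - dg A) ord_max ord_max = 0,
      (A - dg A) ord0 ord_max = A ord0 ord_max &
      (A - dg A) ord_max ord0 = A ord_max ord0].
Proof. by rewrite !mxE /= !subrr !subr0. Qed.

End Main.

Arguments dg {R}.
Arguments dg_diag {R}.
Arguments diag_off {R}.
Arguments offE {R}.
Arguments op_lb {R}.
Arguments op_off {R}.
Arguments trnorm_lb {R}.
Arguments trnorm_off {R}.

Theorem corollary4p1 (R : realType) (p : nat) (x : 'I_p -> 'M[R[i]]_2) :
  dist x (@diagV R p) =
    \big[Num.max/0]_(k < p) Num.max (cabs (x k ord0 ord_max)) (cabs (x k ord_max ord0))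
  /\
  dist1 x (@diagV R p) =
    \sum_(k < p) (cabs (x k ord_max ord0) + cabs (x k ord0 ord_max)).
Proof.
have dgV : diagV (fun i => dg (x i)) by move=> i; exact: dg_diag.
split.
- rewrite /dist.
  set E := [set _ | _ in _].
  set Mx := \big[Num.max/0]_(k < p) _.
  have lbE : lbound E Mx.
    move=> _ [v hv <-]; rewrite /Mnorm.
    apply: bigmax_le; first exact: bigmax_ge_id.
    move=> k _; rewrite ge_max.
    have [d1 d2] := diag_off _ (hv k); have [l1 l2] := op_lb (x k - v k).
    rewrite !mxE d1 d2 !subr0 in l1 l2.
    by rewrite (le_trans l1 (le_bigmax _ (fun i => opnorm (x i - v i)) k))
               (le_trans l2 (le_bigmax _ (fun i => opnorm (x i - v i)) k)).
  have nE : E !=set0 by exists (Mnorm (fun i => x i - dg (x i))), (fun i => dg (x i)).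
  apply/le_anti/andP; split; last exact: lb_le_inf.
  apply: le_trans (ge_inf (ex_intro _ Mx lbE) _) _.
    exact: (ex_intro2 _ _ (fun i => dg (x i)) dgV erefl).
  rewrite /Mnorm; apply: bigmax_le; first exact: bigmax_ge_id.
  move=> k _; have [o1 o2 o3 o4] := offE (x k).
  apply: le_trans (op_off _ o1 o2) _; rewrite o3 o4.
  exact: (le_bigmax _ (fun k => Num.max (cabs (x k ord0 ord_max)) (cabs (x k ord_max ord0))) k).
- rewrite /dist1.
  set E := [set _ | _ in _].
  set Mx := \sum_(k < p) _.
  have lbE : lbound E Mx.
    move=> _ [v hv <-]; rewrite /Mnorm1.
    apply: ler_sum => k _.
    have [d1 d2] := diag_off _ (hv k); have := trnorm_lb (x k - v k).
    by rewrite !mxE d1 d2 !subr0.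
  have nE : E !=set0 by exists (Mnorm1 (fun i => x i - dg (x i))), (fun i => dg (x i)).
  apply/le_anti/andP; split; last exact: lb_le_inf.
  apply: le_trans (ge_inf (ex_intro _ Mx lbE) _) _.
    exact: (ex_intro2 _ _ (fun i => dg (x i)) dgV erefl).
  rewrite /Mnorm1 le_eqVlt; apply/orP; left; apply/eqP.
  apply: eq_bigr => k _; have [o1 o2 o3 o4] := offE (x k).
  by rewrite trnorm_off // o3 o4.
Qed.
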